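(* Let $f\colon R\to S$ be a ring homomorphism. Assume that every semiprime factor ring of $R$ and of $S$ is left or right Goldie, and that the prime radical of every factor ring of $R$ and of $S$ is nilpotent. (1) The following are equivalent: (i) $\lambda$ is a left adjoint to $\rho$; (ii) the correspondence $\mathbf r\colon \operatorname{Spec} S\to\operatorname{Spec} R$ is single-valued (i.e. $\mathbf r P$ is a one-element set for every $P\in\operatorname{Spec} S$), $\mathbf r$ is continuous, and $\mathbf r^{[-1]}V_R(I)=V_S(I^S)$ for all ideals $I$ of $R$. (2) If moreover $S$ is left noetherian, then (i), (ii) and the following are all equivalent: (iii) for each $Q\in\operatorname{Spec} R$ there is a positive integer $t$ such that $f(Q)^tS\subseteq Sf(Q)$; (iv) for each ideal $I$ of $R$ there is a positive integer $t$ such that $f(I)^tS\subseteq Sf(I)$.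
   Context: Rings are associative with identity, not necessarily commutative. For a ring $A$, $\operatorname{Spec} A$ is the set of prime ideals with the Zariski topology, whose closed sets are $V_A(X)=\{P\in\operatorname{Spec} A: P\supseteq X\}$ for $X\subseteq A$. For $U\subseteq \operatorname{Spec} A$, $I(U)$ denotes the intersection of the primes in $U$. $\operatorname{SPEC} A$ denotes the category whose objects are the closed subsets of $\operatorname{Spec} A$ and whose morphisms are inclusions. For a ring homomorphism $f\colon R\to S$: the correspondence $\mathbf r$ assigns to each $P\in\operatorname{Spec} S$ the set $\mathbf r P$ of prime ideals of $R$ minimal over $f^{-1}(P)$. For $V\subseteq\operatorname{Spec} R$, $\mathbf r^{[-1]}V=\{P\in\operatorname{Spec} S:\mathbf rP\subseteq V\}$; $\mathbf r$ is called continuous if $\mathbf r^{[-1]}V$ is closed in $\operatorname{Spec} S$ for every closed $V\subseteq \operatorname{Spec} R$. For an ideal $I$ of $R$, $I^S=\operatorname{ann}_S(S/Sf(I))$ (annihilator of the left $S$-module $S/Sf(I)$). The functor $\lambda\colon\operatorname{SPEC} S\to\operatorname{SPEC} R$ sends $V$ to $V_R(f^{-1}(I(V)))$, and $\rho\colon \operatorname{SPEC} R\to\operatorname{SPEC} S$ sends $V$ to $V_S(I(V)^S)$. ''$\lambda$ is a left adjoint to $\rho$'' means: for all closed $U\subseteq\operatorname{Spec} S$ and closed $V\subseteq\operatorname{Spec} R$, $\lambda U\subseteq V \iff U\subseteq \rho V$. *)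

(* Defs.v *)
(* rings are pzRingType (associative, with 1, possibly the
   zero ring); subsets are classical sets `set T` from mathcomp-classical. *)
From HB Require Import structures.
From mathcomp Require Import all_boot all_order all_algebra.
From mathcomp Require Import boolp classical_sets.
Set Implicit Arguments. Unset Strict Implicit. Unset Printing Implicit Defensive.
Import GRing.Theory.
Local Open Scope ring_scope.
Local Open Scope classical_set_scope.

Section RingNotions.
Variable T : pzRingType.

Inductive addspan (X : set T) : T -> Prop :=
| addspan_in x : X x -> addspan X x
| addspan0 : addspan X 0
| addspanB x y : addspan X x -> addspan X y -> addspan X (x - y).

Definition mulset (A B : set T) : set T :=
  addspan [set a * b | a in A & b in B].

(* X^t (X^0 = Z.1, X^1 = additive span of X, X^(t+1) = X^t X) *)
Fixpoint ipow (X : set T) (t : nat) : set T :=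
  match t with
  | 0 => addspan [set 1]
  | t'.+1 => mulset (ipow X t') X
  end.

Definition left_ideal (L : set T) : Prop :=
  [/\ L 0, (forall x y, L x -> L y -> L (x - y)) & (forall r x, L x -> L (r * x))].

Definition ideal (I : set T) : Prop :=
  [/\ I 0, (forall x y, I x -> I y -> I (x - y)),
      (forall r x, I x -> I (r * x)) & (forall r x, I x -> I (x * r))].

Definition prime_ideal (P : set T) : Prop :=
  [/\ ideal P, P != setT &
      forall A B, ideal A -> ideal B -> mulset A B `<=` P -> A `<=` P \/ B `<=` P].

Definition Spec : set (set T) := [set P | prime_ideal P].

Definition Vset (X : set T) : set (set T) := [set P | Spec P /\ X `<=` P].

Definition closed_Spec (V : set (set T)) : Prop := exists X, V = Vset X.

Definition Iof (U : set (set T)) : set T := \bigcap_(P in U) P.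

Definition nilpotent_ideal (A : set T) : Prop :=
  exists n, (0 < n)%N /\ ipow A n `<=` [set 0].

Definition semiprime_ring : Prop :=
  forall A, ideal A -> nilpotent_ideal A -> A = [set 0].

Definition prime_radical : set T := Iof Spec.

Definition lann (X : set T) : set T := [set r | forall x, X x -> r * x = 0].

Definition acc_left_annihilators : Prop :=
  forall X : nat -> set T, (forall n, lann (X n) `<=` lann (X n.+1)) ->
  exists m, forall n, (m <= n)%N -> lann (X n) = lann (X m).

Definition sum_before (L : nat -> set T) (n : nat) : set T :=
  [set y | exists x : 'I_n -> T, (forall i : 'I_n, L i (x i)) /\ y = \sum_(i < n) x i].

(* finite left uniform dimension: no infinite direct sum of nonzero left ideals *)
Definition finite_left_udim : Prop :=
  ~ exists L : nat -> set T,
      (forall n, left_ideal (L n) /\ L n != [set 0]) /\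
      (forall n, L n `&` sum_before L n `<=` [set 0]).

Definition left_goldie : Prop := finite_left_udim /\ acc_left_annihilators.

Definition left_noetherian : Prop :=
  forall L : nat -> set T, (forall n, left_ideal (L n)) ->
  (forall n, L n `<=` L n.+1) -> exists m, forall n, (m <= n)%N -> L n = L m.

End RingNotions.

Definition right_goldie (T : pzRingType) : Prop := left_goldie (T^c)%type.

(* standing hypothesis on a ring A, quantified over all factor rings
   (= rings T with a surjective ring homomorphism A -> T) *)
Definition factor_hyp (A : pzRingType) : Prop :=
  forall (T : pzRingType) (g : {rmorphism A -> T}), (forall y, exists x, g x = y) ->
    (semiprime_ring T -> left_goldie T \/ right_goldie T) /\
    nilpotent_ideal (@prime_radical T).

Section Morphism.
Variables (R S : pzRingType) (f : {rmorphism R -> S}).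

(* I^S = ann_S (S / S f(I)) *)
Definition extS (I : set R) : set S :=
  [set s | forall x : S, mulset setT (f @` I) (s * x)].

Definition lambda (U : set (set S)) : set (set R) := Vset (f @^-1` Iof U).
Definition rho (V : set (set R)) : set (set S) := Vset (extS (Iof V)).

Definition left_adjoint : Prop :=
  forall U V, closed_Spec U -> closed_Spec V ->
    (lambda U `<=` V <-> U `<=` rho V).

Definition rcorr (P : set S) : set (set R) :=
  [set Q | Spec Q /\ f @^-1` P `<=` Q /\
     forall Q', Spec Q' -> f @^-1` P `<=` Q' -> Q' `<=` Q -> Q' = Q].

Definition rinv (V : set (set R)) : set (set S) :=
  [set P | Spec P /\ rcorr P `<=` V].

Definition r_single_valued : Prop :=
  forall P, Spec P -> exists Q, rcorr P = [set Q].

Definition r_continuous : Prop :=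
  forall V, closed_Spec V -> closed_Spec (rinv V).

Definition cond_ii : Prop :=
  [/\ r_single_valued, r_continuous &
      forall I, ideal I -> rinv (Vset I) = Vset (extS I)].

Definition cond_iii : Prop :=
  forall Q, Spec Q -> exists t, (0 < t)%N /\
    mulset (ipow (f @` Q) t) setT `<=` mulset setT (f @` Q).

Definition cond_iv : Prop :=
  forall I, ideal I -> exists t, (0 < t)%N /\
    mulset (ipow (f @` I) t) setT `<=` mulset setT (f @` I).

End Morphism.

(* Main.v *)
Require Import Defs.
From HB Require Import structures.
From mathcomp Require Import all_boot all_order all_algebra.
From mathcomp Require Import boolp classical_sets.
From mathcomp Require Import generic_quotient.
From Stdlib Require List.
Set Implicit Arguments. Unset Strict Implicit. Unset Printing Implicit Defensive.
Import GRing.Theory.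
Local Open Scope ring_scope.
Local Open Scope classical_set_scope.


Section Basic.
Variable T : pzRingType.
Implicit Types (A B C X Y I J P : set T).

Definition addsub Y := Y 0 /\ forall x y, Y x -> Y y -> Y (x - y).

Lemma addsub_opp Y x : addsub Y -> Y x -> Y (- x).
Proof. by case=> Y0 YB Yx; rewrite -sub0r; apply: YB. Qed.

Lemma addsub_add Y x y : addsub Y -> Y x -> Y y -> Y (x + y).
Proof. by move=> hY Yx Yy; rewrite -[y]opprK; apply: hY.2 => //; apply: addsub_opp. Qed.

Lemma addspan_addsub X : addsub (addspan X).
Proof. by split; [apply: addspan0| move=> x y; apply: addspanB]. Qed.

Lemma addspan_min X Y : addsub Y -> X `<=` Y -> addspan X `<=` Y.
Proof. by move=> [Y0 YB] XY x; elim=> [a /XY| |a b _ ha _ hb]; [| |apply: YB]. Qed.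

Lemma addspan_sub X : X `<=` addspan X.
Proof. by move=> x; apply: addspan_in. Qed.

Lemma addspanS X Y : X `<=` Y -> addspan X `<=` addspan Y.
Proof. by move=> XY; apply: addspan_min; [apply: addspan_addsub| move=> x /XY; apply: addspan_in]. Qed.

Lemma addspan_id Y : addsub Y -> addspan Y = Y.
Proof. by move=> hY; apply/seteqP; split; [apply: addspan_min| apply: addspan_sub]. Qed.

Lemma mulset_addsub A B : addsub (mulset A B).
Proof. exact: addspan_addsub. Qed.

Lemma mulset_gen A B a b : A a -> B b -> mulset A B (a * b).
Proof. by move=> Aa Bb; apply: addspan_in; exists a => //; exists b. Qed.

Lemma mulset_min A B Y : addsub Y -> (forall a b, A a -> B b -> Y (a * b)) ->
  mulset A B `<=` Y.
Proof. by move=> hY H; apply: addspan_min => // _ [a Aa [b Bb <-]]; apply: H. Qed.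

Lemma mulsetS A B C X : A `<=` C -> B `<=` X -> mulset A B `<=` mulset C X.
Proof.
move=> AC BX; apply: mulset_min; first exact: mulset_addsub.
by move=> a b /AC Ca /BX Xb; apply: mulset_gen.
Qed.

Lemma addspan_mulr X b Y : addsub Y -> (forall a, X a -> Y (a * b)) ->
  forall x, addspan X x -> Y (x * b).
Proof.
move=> hY H x; elim=> [a /H //| |x1 x2 _ h1 _ h2]; first by rewrite mul0r; case: hY.
by rewrite mulrBl; apply: hY.2.
Qed.

Lemma addspan_mull X a Y : addsub Y -> (forall b, X b -> Y (a * b)) ->
  forall x, addspan X x -> Y (a * x).
Proof.
move=> hY H x; elim=> [b /H //| |x1 x2 _ h1 _ h2]; first by rewrite mulr0; case: hY.
by rewrite mulrBr; apply: hY.2.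
Qed.

Lemma mulset_span_l A B x b : mulset A B x -> mulset (mulset A B) setT (x * b).
Proof. by move=> h; apply: mulset_gen. Qed.

Lemma mulsetA_sub A B C : mulset (mulset A B) C `<=` mulset A (mulset B C).
Proof.
apply: mulset_min; first exact: mulset_addsub.
move=> x c Ax Cc; apply: (addspan_mulr (X := [set a * b | a in A & b in B])) => //.
  exact: mulset_addsub.
by move=> _ [a Aa [b Bb <-]]; rewrite -mulrA; apply: mulset_gen => //; apply: mulset_gen.
Qed.

Lemma mulsetA_sub' A B C : mulset A (mulset B C) `<=` mulset (mulset A B) C.
Proof.
apply: mulset_min; first exact: mulset_addsub.
move=> a x Aa Bx; apply: (addspan_mull (X := [set b * c | b in B & c in C])) => //.
  exact: mulset_addsub.
by move=> _ [b Bb [c Cc <-]]; rewrite mulrA; apply: mulset_gen => //; apply: mulset_gen.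
Qed.

Lemma ideal_addsub I : ideal I -> addsub I.
Proof. by case. Qed.

Lemma mulset_idealr A I : ideal I -> mulset A I `<=` I.
Proof. by move=> hI; apply: mulset_min => [|a b _ Ib]; [exact: ideal_addsub| case: hI => _ _ H _; apply: H]. Qed.

Lemma mulset_ideall I A : ideal I -> mulset I A `<=` I.
Proof. by move=> hI; apply: mulset_min => [|a b Ia _]; [exact: ideal_addsub| case: hI => _ _ _ H; apply: H]. Qed.

Lemma mulset_ideal A B : ideal A -> ideal B -> ideal (mulset A B).
Proof.
move=> hA hB; split; [exact: addspan0| move=> x y; exact: addspanB| |].
- move=> r x; apply: (addspan_mull (X := [set a * b | a in A & b in B])).
    exact: mulset_addsub.
  by move=> _ [a Aa [b Bb <-]]; rewrite mulrA; apply: mulset_gen => //; case: hA => _ _ H _; apply: H.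
- move=> r x h; apply: (addspan_mulr (X := [set a * b | a in A & b in B])) => //.
    exact: mulset_addsub.
  by move=> _ [a Aa [b Bb <-]]; rewrite -mulrA; apply: mulset_gen => //; case: hB => _ _ _ H; apply: H.
Qed.

Lemma ideal_setT : ideal (@setT T).
Proof. by []. Qed.

Lemma mulsetT_l I : ideal I -> mulset setT I = I.
Proof.
move=> hI; apply/seteqP; split; first exact: mulset_idealr.
by move=> x Ix; rewrite -[x]mul1r; apply: mulset_gen.
Qed.

Lemma mulsetT_r I : ideal I -> mulset I setT = I.
Proof.
move=> hI; apply/seteqP; split; first exact: mulset_ideall.
by move=> x Ix; rewrite -[x]mulr1; apply: mulset_gen.
Qed.

Lemma Z1_mul I z x : ideal I -> addspan [set 1] z -> I x -> I (z * x).
Proof.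
move=> hI hz Ix; apply: (addspan_mulr (X := [set 1])) hz => //; first exact: ideal_addsub.
by move=> a ->; rewrite mul1r.
Qed.

Lemma ipow1 I : ideal I -> ipow I 1 = I.
Proof.
move=> hI; apply/seteqP; split.
  by apply: mulset_min => [|z x hz Ix]; [exact: ideal_addsub| exact: Z1_mul].
by move=> x Ix; rewrite -[x]mul1r; apply: mulset_gen => //; apply: addspan_in.
Qed.

Lemma ipow_ideal I n : ideal I -> ideal (ipow I n.+1).
Proof.
move=> hI; elim: n => [|n IH]; first by rewrite ipow1.
exact: mulset_ideal.
Qed.

Lemma ipowS_sub Y k I : ideal I -> ipow Y k `<=` I -> ipow Y k.+1 `<=` I.
Proof. move=> hI h; eapply subset_trans; last exact: (mulset_ideall (A:=Y) hI). exact: mulsetS. Qed.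

Lemma ipow_le_sub Y k k' I : ideal I -> (k <= k')%N -> ipow Y k `<=` I -> ipow Y k' `<=` I.
Proof.
move=> hI /subnK <-; elim: (k' - k)%N => // d IH h; rewrite addSn.
by apply: ipowS_sub => //; apply: IH.
Qed.

Lemma ipow_add Y a b : ipow Y (a + b) `<=` mulset (ipow Y a) (ipow Y b).
Proof.
elim: b => [|b IH].
  by rewrite addn0 => x h; rewrite -[x]mulr1; apply: mulset_gen => //; apply: addspan_in.
rewrite addnS /=; eapply subset_trans; last exact: mulsetA_sub.
by apply: mulsetS.
Qed.

Lemma ipowSl I n : ideal I -> ipow I n.+1 `<=` mulset I (ipow I n).
Proof.
move=> hI; elim: n => [|n IH].
  by rewrite ipow1 // => x Ix; rewrite -[x]mulr1; apply: mulset_gen => //; apply: addspan_in.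
rewrite [ipow I n.+2]/=; eapply subset_trans; last exact: mulsetA_sub.
by apply: mulsetS.
Qed.

Fixpoint prodl (L : seq (set T)) : set T :=
  match L with [::] => setT | A :: L' => mulset A (prodl L') end.

Definition all_ideal (L : seq (set T)) := forall A, List.In A L -> ideal A.

Lemma prodl_ideal L : all_ideal L -> ideal (prodl L).
Proof.
elim: L => [|A L IH] hL //=; apply: mulset_ideal; first by apply: hL; left.
by apply: IH => B hB; apply: hL; right.
Qed.

Lemma prodl_cat L1 L2 : prodl (L1 ++ L2) `<=` mulset (prodl L1) (prodl L2).
Proof.
elim: L1 => [|A L1 IH] /=.
  by move=> x h; rewrite -[x]mul1r; apply: mulset_gen.
eapply subset_trans; last exact: mulsetA_sub'. exact: mulsetS.
Qed.

Lemma prodl_sub_each L A : all_ideal L -> List.In A L -> prodl L `<=` A.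
Proof.
elim: L => [//|B L IH] hL /= [<-|hA].
  by apply: mulset_ideall; apply: hL; left.
have hL' : all_ideal L by move=> C hC; apply: hL; right.
exact: (subset_trans (mulset_idealr (A:=B) (prodl_ideal hL')) (IH hL' hA)).
Qed.

Lemma prime_ideal_ideal P : prime_ideal P -> ideal P.
Proof. by case. Qed.

Lemma prime_neqT P : prime_ideal P -> ~ P 1.
Proof.
case=> hP /eqP nT _ P1; apply: nT; apply/seteqP; split => // x _.
by rewrite -[x]mulr1; case: hP => _ _ H _; apply: H.
Qed.

Lemma prime_prodl P L : prime_ideal P -> all_ideal L -> prodl L `<=` P ->
  exists2 A, List.In A L & A `<=` P.
Proof.
move=> hP; elim: L => [|A L IH] hL /= h.
  by exfalso; apply: (prime_neqT hP); apply: h.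
have hA : ideal A by apply: hL; left.
have hL' : all_ideal L by move=> B hB; apply: hL; right.
case: hP => _ _ /(_ _ _ hA (prodl_ideal hL') h) [hA'|/(IH hL') [B hB hBP]].
  by exists A => //; left.
by exists B => //; right.
Qed.

Lemma prime_ipow P I n : prime_ideal P -> ideal I -> ipow I n.+1 `<=` P -> I `<=` P.
Proof.
move=> hP hI; elim: n => [|n IH]; first by rewrite ipow1.
move=> h; case: hP => _ _ /(_ _ _ (ipow_ideal n hI) hI h) [/IH//|//].
Qed.

Lemma ipow_prodl Y K L : all_ideal L -> (forall A, List.In A L -> ipow Y K `<=` A) ->
  ipow Y (K * size L) `<=` prodl L.
Proof.
elim: L => [|A L IH] hL h //=.
rewrite mulnS; eapply subset_trans; first exact: ipow_add. apply: mulsetS.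
  by apply: h; left.
by apply: IH => [B hB|B hB]; [apply: hL| apply: h]; right.
Qed.

Lemma ipow_prodl2 I L : ideal I -> all_ideal L -> (forall A, List.In A L -> I `<=` A) ->
  ipow I (size L).+1 `<=` prodl L.
Proof.
move=> hI; elim: L => [|A L IH] hL h //.
eapply subset_trans; first exact: (ipowSl (n:=(size L).+1) hI). apply: mulsetS.
  by apply: h; left.
by apply: IH => [B hB|B hB]; [apply: hL| apply: h]; right.
Qed.

Lemma flatten_nseqS (L : seq (set T)) n : flatten (nseq n.+1 L) = flatten (nseq n L) ++ L.
Proof.
by rewrite -addn1 nseqD flatten_cat /= cats0.
Qed.

Lemma prodl_flatten L N n : ideal N -> prodl L `<=` N ->
  prodl (flatten (nseq n.+1 L)) `<=` ipow N n.+1.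
Proof.
move=> hN hL; elim: n => [|n IH]; first by rewrite ipow1 //= cats0.
rewrite flatten_nseqS; eapply subset_trans; first exact: prodl_cat.
by apply: mulsetS.
Qed.

Lemma In_flatten_nseq (L : seq (set T)) n A : List.In A (flatten (nseq n L)) -> List.In A L.
Proof.
elim: n => [//|n IH] h.
by case: (List.in_app_or _ _ _ h) => [//|/IH].
Qed.

End Basic.


Section Morph.
Variables (A B : pzRingType) (g : {rmorphism A -> B}).

Lemma img_addsub X : addsub X -> addsub (g @` X).
Proof.
case=> X0 XB; split; first by exists 0 => //; rewrite rmorph0.
by move=> _ _ [x Xx <-] [y Xy <-]; exists (x - y); [apply: XB| rewrite rmorphB].
Qed.

Lemma pre_addsub Y : addsub Y -> addsub (g @^-1` Y).
Proof. by case=> Y0 YB; split; rewrite /preimage /= ?rmorph0 // => x y hx hy; rewrite rmorphB; apply: YB. Qed.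

Lemma img_addspan X : g @` addspan X `<=` addspan (g @` X).
Proof.
move=> _ [x hx <-]; elim: hx => [a Xa| |a b _ ha _ hb].
- by apply: addspan_in; exists a.
- by rewrite rmorph0; apply: addspan0.
- by rewrite rmorphB; apply: addspanB.
Qed.

Lemma img_mulset X Y : g @` mulset X Y `<=` mulset (g @` X) (g @` Y).
Proof.
eapply subset_trans; first exact: img_addspan. apply: addspan_min; first exact: mulset_addsub.
move=> _ [_ [a Xa [b Yb <-]] <-]; rewrite rmorphM.
by apply: mulset_gen; [exists a| exists b].
Qed.

Lemma img_ipow X n : g @` ipow X n `<=` ipow (g @` X) n.
Proof.
elim: n => [|n IH] /=.
  eapply subset_trans; first exact: img_addspan. apply: addspanS.
  by move=> _ [_ -> <-]; rewrite rmorph1.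
eapply subset_trans; first exact: img_mulset. exact: mulsetS.
Qed.

Lemma ipow_img X n : ipow (g @` X) n `<=` g @` ipow X n.
Proof.
elim: n => [|n IH] /=.
  apply: addspan_min; first exact/img_addsub/addspan_addsub.
  by move=> _ ->; exists 1; [apply: addspan_in| rewrite rmorph1].
apply: mulset_min; first exact/img_addsub/mulset_addsub.
move=> _ _ /IH [a ha <-] [b hb <-]; exists (a * b); last by rewrite rmorphM.
exact: mulset_gen.
Qed.

Lemma pre_mulset X Y : mulset (g @^-1` X) (g @^-1` Y) `<=` g @^-1` mulset X Y.
Proof.
apply: mulset_min; first exact/pre_addsub/mulset_addsub.
by move=> a b ha hb; rewrite /preimage /= rmorphM; apply: mulset_gen.
Qed.

Lemma pre_prodl L : prodl (map (preimage g) L) `<=` g @^-1` prodl L.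
Proof.
elim: L => [//|X L IH] /=.
eapply subset_trans; last exact: pre_mulset.
exact: mulsetS.
Qed.

Lemma pre_ideal J : ideal J -> ideal (g @^-1` J).
Proof.
case=> J0 JB JL JR; split; rewrite /preimage /= ?rmorph0 //.
- by move=> x y hx hy; rewrite rmorphB; apply: JB.
- by move=> r x hx; rewrite rmorphM; apply: JL.
- by move=> r x hx; rewrite rmorphM; apply: JR.
Qed.

Hypothesis gsurj : forall y, exists x, g x = y.

Lemma img_ideal J : ideal J -> ideal (g @` J).
Proof.
case=> J0 JB JL JR; split.
- by exists 0; rewrite ?rmorph0.
- by move=> _ _ [x Jx <-] [y Jy <-]; exists (x - y); [apply: JB| rewrite rmorphB].
- move=> r _ [x Jx <-]; have [r' <-] := gsurj r.
  by exists (r' * x); [apply: JL| rewrite rmorphM].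
- move=> r _ [x Jx <-]; have [r' <-] := gsurj r.
  by exists (x * r'); [apply: JR| rewrite rmorphM].
Qed.

Lemma pre_img J : J `<=` g @^-1` (g @` J).
Proof. by move=> x Jx; exists x. Qed.

Lemma img_pre J : g @` (g @^-1` J) = J.
Proof.
apply/seteqP; split; first by move=> _ [x hx <-].
by move=> y Jy; have [x hx] := gsurj y; exists x; rewrite // /preimage /= hx.
Qed.

Lemma pre_prime P : prime_ideal P -> prime_ideal (g @^-1` P).
Proof.
move=> hP; have hPi := prime_ideal_ideal hP; split.
- exact: pre_ideal.
- apply/eqP => h; apply: (prime_neqT hP); rewrite -(rmorph1 g).
  by have : (g @^-1` P) 1 by rewrite h.
- move=> X Y hX hY hXY.
  have hm : mulset (g @` X) (g @` Y) `<=` P.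
    apply: mulset_min; first exact: ideal_addsub.
    move=> _ _ [a Xa <-] [b Yb <-]; rewrite -rmorphM.
    by apply: hXY; apply: mulset_gen.
  case: hP => _ _ /(_ _ _ (img_ideal hX) (img_ideal hY) hm) [h|h].
  + by left => x Xx; apply: h; exists x.
  + by right => x Xx; apply: h; exists x.
Qed.

End Morph.

Section SpecFacts.
Variable T : pzRingType.
Implicit Types (X I P : set T).

Lemma Iof_ideal (U : set (set T)) : U `<=` Spec (T:=T) -> ideal (Iof U).
Proof.
move=> hU; split.
- by move=> P /hU [[]].
- by move=> x y hx hy P UP; have [[_ H _ _] _ _] := hU P UP; apply: H; [apply: hx| apply: hy].
- by move=> r x hx P UP; have [[_ _ H _] _ _] := hU P UP; apply: H; apply: hx.
- by move=> r x hx P UP; have [[_ _ _ H] _ _] := hU P UP; apply: H; apply: hx.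
Qed.

Lemma Vset_Spec X : Vset X `<=` Spec (T:=T).
Proof. by move=> P []. Qed.

Lemma Iof_Vset X : X `<=` Iof (Vset X).
Proof. by move=> x Xx P [_ h]; apply: h. Qed.

Lemma Vset_Iof X : Vset (Iof (Vset X)) = Vset X.
Proof.
apply/seteqP; split => P [hP h]; split => //.
  exact: (subset_trans (@Iof_Vset X) h).
by move=> x hx; apply: hx.
Qed.

Lemma closed_Iof (U : set (set T)) : closed_Spec U -> U = Vset (Iof U).
Proof. by case=> X ->; rewrite Vset_Iof. Qed.

Lemma closed_sub (U : set (set T)) : closed_Spec U -> U `<=` Spec (T:=T).
Proof. by case=> X ->; apply: Vset_Spec. Qed.

Lemma Iof_Vset_prime P : prime_ideal P -> Iof (Vset P) = P.
Proof.
move=> hP; apply/seteqP; split; last exact: Iof_Vset.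
by move=> x hx; apply: hx; split.
Qed.

Lemma VsetS X Y : X `<=` Y -> Vset Y `<=` Vset X.
Proof. by move=> XY P [hP h]; split => //; exact: (subset_trans XY h). Qed.

Lemma Vset_closed X : closed_Spec (Vset X).
Proof. by exists X. Qed.

End SpecFacts.


Section Quot.
Variable T : pzRingType.
Variable I : set T.
Hypothesis hI : ideal I.

Let I0 : I 0. Proof. by case: hI. Qed.
Let IB x y : I x -> I y -> I (x - y). Proof. by case: hI => _ H _ _; apply: H. Qed.
Let IN x : I x -> I (- x). Proof. by move=> h; rewrite -sub0r; apply: IB. Qed.
Let ID x y : I x -> I y -> I (x + y). Proof. by move=> hx hy; rewrite -[y]opprK; apply: IB => //; apply: IN. Qed.
Let IMl r x : I x -> I (r * x). Proof. by case: hI => _ _ H _; apply: H. Qed.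
Let IMr r x : I x -> I (x * r). Proof. by case: hI => _ _ _ H; apply: H. Qed.

Definition qrel : rel T := fun x y => `[< I (x - y) >].
Lemma qrel_refl : reflexive qrel.
Proof. by move=> x; apply/asboolP; rewrite subrr. Qed.
Lemma qrel_sym : symmetric qrel.
Proof.
move=> x y; apply/asboolP/asboolP => h; by rewrite -opprB; apply: IN.
Qed.
Lemma qrel_trans : transitive qrel.
Proof.
move=> y x z /asboolP h1 /asboolP h2; apply/asboolP.
by have := ID h1 h2; rewrite addrA subrK.
Qed.

Definition qe := EquivRel qrel qrel_refl qrel_sym qrel_trans.
Definition qtype := {eq_quot qe}%qT.
HB.instance Definition _ := Choice.on qtype.
Definition qpi (x : T) : qtype := (\pi_qtype x)%qT.

Local Open Scope quotient_scope.

Lemma qpiP x y : qpi x = qpi y <-> I (x - y).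
Proof.
split; first by move/eqmodP => /asboolP.
by move=> h; apply/eqmodP; apply/asboolP.
Qed.

Lemma qpi_repr (a : qtype) : qpi (repr a) = a.
Proof. exact: reprK. Qed.

Lemma repr_qpi x : I (repr (qpi x) - x).
Proof. by apply/qpiP; rewrite qpi_repr. Qed.

Lemma qind (P : qtype -> Prop) : (forall x, P (qpi x)) -> forall a, P a.
Proof. by move=> H a; rewrite -[a]qpi_repr; apply: H. Qed.

Definition qzero := qpi 0.
Definition qone := qpi 1.
Definition qadd (a b : qtype) := qpi (repr a + repr b).
Definition qopp (a : qtype) := qpi (- repr a).
Definition qmul (a b : qtype) := qpi (repr a * repr b).

Lemma qaddE x y : qadd (qpi x) (qpi y) = qpi (x + y).
Proof.
apply/qpiP; have := ID (repr_qpi x) (repr_qpi y).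
by rewrite opprD addrACA.
Qed.

Lemma qoppE x : qopp (qpi x) = qpi (- x).
Proof. by apply/qpiP; have := IN (repr_qpi x); rewrite opprB opprK addrC. Qed.

Lemma qmulE x y : qmul (qpi x) (qpi y) = qpi (x * y).
Proof.
apply/qpiP; set a := repr (qpi x); set b := repr (qpi y).
have -> : a * b - x * y = (a - x) * b + x * (b - y).
  by rewrite mulrBl mulrBr addrA subrK.
by apply: ID; [apply: IMr; apply: repr_qpi| apply: IMl; apply: repr_qpi].
Qed.

Lemma qaddA : associative qadd.
Proof. by elim/qind=> x; elim/qind=> y; elim/qind=> z; rewrite !qaddE addrA. Qed.
Lemma qaddC : commutative qadd.
Proof. by elim/qind=> x; elim/qind=> y; rewrite !qaddE addrC. Qed.
Lemma qadd0 : left_id qzero qadd.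
Proof. by elim/qind=> x; rewrite /qzero qaddE add0r. Qed.
Lemma qaddN : left_inverse qzero qopp qadd.
Proof. by elim/qind=> x; rewrite qoppE qaddE addNr. Qed.
Lemma qmulA : associative qmul.
Proof. by elim/qind=> x; elim/qind=> y; elim/qind=> z; rewrite !qmulE mulrA. Qed.
Lemma qmul1 : left_id qone qmul.
Proof. by elim/qind=> x; rewrite /qone qmulE mul1r. Qed.
Lemma qmulr1 : right_id qone qmul.
Proof. by elim/qind=> x; rewrite /qone qmulE mulr1. Qed.
Lemma qmulDl : left_distributive qmul qadd.
Proof. by elim/qind=> x; elim/qind=> y; elim/qind=> z; rewrite !(qaddE, qmulE) mulrDl. Qed.
Lemma qmulDr : right_distributive qmul qadd.
Proof. by elim/qind=> x; elim/qind=> y; elim/qind=> z; rewrite !(qaddE, qmulE) mulrDr. Qed.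

HB.instance Definition _ := GRing.isPzRing.Build qtype
  qaddA qaddC qadd0 qaddN qmulA qmul1 qmulr1 qmulDl qmulDr.

Lemma qpi_is_zmod : GRing.zmod_morphism qpi.
Proof. by move=> x y; rewrite -[qpi x - qpi y]/(qadd (qpi x) (qopp (qpi y))) qoppE qaddE. Qed.
HB.instance Definition _ := GRing.isZmodMorphism.Build T qtype qpi qpi_is_zmod.
Lemma qpi_is_monoid : GRing.monoid_morphism qpi.
Proof. by split => // x y; rewrite -[qpi x * qpi y]/(qmul (qpi x) (qpi y)) qmulE. Qed.
HB.instance Definition _ := GRing.isMonoidMorphism.Build T qtype qpi qpi_is_monoid.

Definition qmorph : {rmorphism T -> qtype} := qpi.

Lemma qmorph_surj : forall y, exists x, qmorph x = y.
Proof. by move=> y; exists (repr y); apply: qpi_repr. Qed.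

Lemma qmorph_ker x : qmorph x = 0 <-> I x.
Proof. by rewrite -[0]/(qpi 0); split => [/qpiP|h]; [rewrite subr0| apply/qpiP; rewrite subr0]. Qed.

End Quot.
Arguments qmorph_surj {T I} hI y.


Section Goldie.
Variable U : pzRingType.
Implicit Types (A B C X P : set U).

Hypothesis HSP : forall A, ideal A -> mulset A A `<=` [set 0] -> A `<=` [set 0].
Hypothesis Hacc : acc_left_annihilators U.
Hypothesis Hud : finite_left_udim U.

Definition nonzero A := exists a, A a /\ a <> 0.

Lemma lann_ideal B : ideal B -> ideal (lann B).
Proof.
move=> [_ _ BL _]; split.
- by move=> x _; rewrite mul0r.
- by move=> a b ha hb x Bx; rewrite mulrBl ha // hb // subr0.
- by move=> r a ha x Bx; rewrite -mulrA ha // mulr0.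
- by move=> r a ha x Bx; rewrite -mulrA; apply: ha; apply: BL.
Qed.

Definition good C B := [/\ ideal B, B `<=` C & nonzero B].

Lemma step C : ideal C -> nonzero C ->
  exists B, good C B /\ prime_ideal (lann B).
Proof.
move=> hC nzC.
have [B [gB maxB]] : exists B, good C B /\
    forall B', good C B' -> lann B `<=` lann B' -> lann B' `<=` lann B.
  apply: contrapT => H.
  have H' : forall B, exists B', good C B -> good C B' /\ lann B `<=` lann B' /\ ~ (lann B' `<=` lann B).
    move=> B; case: (pselect (good C B)) => gB; last by exists B.
    have : ~ (forall B', good C B' -> lann B `<=` lann B' -> lann B' `<=` lann B).
      by move=> h; apply: H; exists B.
    move=> /existsNP [B' /not_implyP [gB' /not_implyP [h1 h2]]].
    by exists B'.
  have [nxt hnxt] := choice H'.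
  pose X n := iter n nxt C.
  have gX : forall n, good C (X n).
    elim=> [|n IH]; first by split => //.
    by have [] := hnxt _ IH.
  have [m hm] : exists m, forall n, (m <= n)%N -> lann (X n) = lann (X m).
    apply: Hacc => n; by have [_ []] := hnxt _ (gX n).
  have [_ [_ h]] := hnxt _ (gX m).
  by apply: h; rewrite -/(X m.+1) (hm m.+1 (leqnSn m)).
exists B; split => //.
have [hB BC [b [Bb b0]]] := gB.
split; first exact: lann_ideal.
  apply/eqP => hT; have : lann B 1 by rewrite hT.
  by move=> /(_ b Bb); rewrite mul1r.
move=> A1 A2 h1 h2 h12.
case: (pselect (A2 `<=` lann B)) => hA2; first by right.
left.
move: hA2 => /existsNP [a2 /not_implyP [A2a2 /existsNP [b' /not_implyP [Bb' ab0]]]].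
pose B' := mulset A2 B.
have gB' : good C B'.
  split; first exact: mulset_ideal.
    exact: (subset_trans (mulset_idealr (A:=A2) hB) BC).
  by exists (a2 * b'); split => //; apply: mulset_gen.
have l1 : lann B `<=` lann B'.
  by move=> r hr y /(mulset_idealr (A:=A2) hB) By; apply: hr.
have := maxB _ gB' l1 => l2.
move=> a1 A1a1; apply: l2 => y hy.
apply: (addspan_mull (X := [set a * b | a in A2 & b in B]) (Y := [set 0])) hy.
  by split => // x y' -> ->; rewrite subr0.
move=> _ [a Aa [bb Bbb <-]]; rewrite mulrA.
by apply: (h12 (a1 * a)) => //; apply: mulset_gen.
Qed.

Definition bigI (L : seq (set U)) : set U := [set x | forall P, List.In P L -> P x].

Lemma bigI_ideal L : (forall P, List.In P L -> prime_ideal P) -> ideal (bigI L).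
Proof.
move=> hL; split.
- by move=> P /hL /prime_ideal_ideal [].
- by move=> x y hx hy P hP; have [_ H _ _] := prime_ideal_ideal (hL P hP); apply: H; [apply: hx| apply: hy].
- by move=> r x hx P hP; have [_ _ H _] := prime_ideal_ideal (hL P hP); apply: H; apply: hx.
- by move=> r x hx P hP; have [_ _ _ H] := prime_ideal_ideal (hL P hP); apply: H; apply: hx.
Qed.

Lemma sum_before_ideal (L : nat -> set U) n : (forall i, ideal (L i)) ->
  ideal (sum_before L n).
Proof.
move=> hL; split.
- exists (fun _ => 0); split; last by rewrite big1.
  by move=> i; case: (hL i).
- move=> _ _ [x [hx ->]] [y [hy ->]]; exists (fun i => x i - y i); split.
    by move=> i; case: (hL i) => _ H _ _; apply: H.
  by rewrite sumrB.
- move=> r _ [x [hx ->]]; exists (fun i => r * x i); split.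
    by move=> i; case: (hL i) => _ _ H _; apply: H.
  by rewrite mulr_sumr.
- move=> r _ [x [hx ->]]; exists (fun i => x i * r); split.
    by move=> i; case: (hL i) => _ _ _ H; apply: H.
  by rewrite mulr_suml.
Qed.

Lemma goldie_finite : exists L : seq (set U),
  (forall P, List.In P L -> prime_ideal P) /\
  (forall x, (forall P, List.In P L -> P x) -> x = 0).
Proof.
apply: contrapT => H.
have H' : forall L : seq (set U), exists B, (forall P, List.In P L -> prime_ideal P) ->
    good (bigI L) B /\ prime_ideal (lann B).
  move=> L; case: (pselect (forall P, List.In P L -> prime_ideal P)) => hL; last first.
    by exists set0.
  have nz : nonzero (bigI L).
    apply: contrapT => nz; apply: H; exists L; split => // x hx.
    by apply: contrapT => x0; apply: nz; exists x.
  have [B [gB pB]] := step (bigI_ideal hL) nz.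
  by exists B.
have [F hF] := choice H'.
pose fix Ls n := if n is n'.+1 then lann (F (Ls n')) :: Ls n' else [::].
have hLs : forall n, (forall P, List.In P (Ls n) -> prime_ideal P).
  elim=> [//|n IH] P /= [<-|]; last exact: IH.
  by have [] := hF _ IH.
pose Bs n := F (Ls n).
have gBs : forall n, good (bigI (Ls n)) (Bs n) by move=> n; have [] := hF _ (hLs n).
have inLs : forall n i, (i < n)%N -> List.In (lann (Bs i)) (Ls n).
  elim=> [//|n IH] i; rewrite ltnS leq_eqVlt => /orP [/eqP ->|hi]; first by left.
  by right; apply: IH.
apply: Hud; exists Bs; split.
  move=> n; have [[BB0 BBB BBL BBR] _ [b [Bb b0]]] := gBs n; split.
    by split.
  by apply/eqP => h; apply: b0; move: Bb; rewrite h.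
move=> n.
have hI : ideal (Bs n `&` sum_before Bs n).
  have hB : ideal (Bs n) by case: (gBs n).
  have hS : ideal (sum_before Bs n) by apply: sum_before_ideal => i; case: (gBs i).
  case: hB => ? ? ? ?; case: hS => ? ? ? ?; split.
  - by split.
  - by move=> x y [? ?] [? ?]; split; auto.
  - by move=> r x [? ?]; split; auto.
  - by move=> r x [? ?]; split; auto.
apply: HSP => //.
apply: mulset_min; first by split => // x y -> ->; rewrite subr0.
move=> a _ [Ba _] [_ [x [hx ->]]]; rewrite mulr_sumr big1 // => i _.
have [_ hsub _] := gBs n.
have := hsub a Ba (lann (Bs i)) (inLs n i (ltn_ord i)).
by apply.
Qed.

End Goldie.


Section Conv.
Variable T : pzRingType.
Notation Tc := (T^c)%type.

Lemma addspan_c (X : set T) : addspan (T:=Tc) X = addspan (T:=T) X.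
Proof.
apply/seteqP; split => x; elim => [a Xa| |a b _ ha _ hb].
- exact: addspan_in.
- exact: addspan0.
- exact: addspanB.
- exact: addspan_in.
- exact: addspan0.
- exact: (addspanB (T:=Tc)).
Qed.

Lemma mulset_c (A B : set T) : mulset (T:=Tc) A B = mulset (T:=T) B A.
Proof.
rewrite /mulset addspan_c; f_equal; apply/seteqP; split.
  by move=> _ [a Aa [b Bb <-]]; exists b => //; exists a.
by move=> _ [b Bb [a Aa <-]]; exists a => //; exists b.
Qed.

Lemma ideal_c (A : set T) : ideal (T:=Tc) A <-> ideal (T:=T) A.
Proof.
by split; case=> h0 hB hL hR; split.
Qed.

Lemma prime_c (P : set T) : prime_ideal (T:=Tc) P -> prime_ideal (T:=T) P.
Proof.
case=> /ideal_c hP hT hpr; split => //.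
move=> A B hA hB hAB; have : mulset (T:=Tc) B A `<=` P by rewrite mulset_c.
move=> /(hpr _ _ (proj2 (ideal_c B) hB) (proj2 (ideal_c A) hA)) [] h; by [right| left].
Qed.

Lemma HSP_of_semiprime : semiprime_ring T ->
  forall A : set T, ideal A -> mulset A A `<=` [set 0] -> A `<=` [set 0].
Proof.
move=> hsp A hA hAA.
have -> // : A = [set 0]; apply: hsp => //; exists 2%N; split => //.
by rewrite -[ipow A 2]/(mulset (ipow A 1) A) ipow1.
Qed.

Lemma HSP_c : semiprime_ring T ->
  forall A : set Tc, ideal A -> mulset A A `<=` [set 0] -> A `<=` [set 0].
Proof.
move=> hsp A /ideal_c hA; rewrite mulset_c; exact: HSP_of_semiprime.
Qed.

Lemma goldie_finite_T : semiprime_ring T -> left_goldie T \/ right_goldie T ->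
  exists L : seq (set T),
  (forall P, List.In P L -> prime_ideal P) /\
  (forall x, (forall P, List.In P L -> P x) -> x = 0).
Proof.
move=> hsp [[hud hacc]|[hud hacc]].
  exact: (goldie_finite (HSP_of_semiprime hsp) hacc hud).
have [L [hL h0]] := goldie_finite (HSP_c hsp) hacc hud.
by exists L; split => // P /hL /prime_c.
Qed.

End Conv.


Lemma ipowS (T : pzRingType) (X Y : set T) n : X `<=` Y -> ipow X n `<=` ipow Y n.
Proof. by move=> XY; elim: n => [//|n IH] /=; apply: mulsetS. Qed.

Lemma In_map_iff (aT rT : Type) (h : aT -> rT) (s : seq aT) y :
  List.In y (map h s) <-> exists x, h x = y /\ List.In x s.
Proof.
elim: s => [|x s IH] /=; first by split => // -[z [_ []]].
split.
  case=> [<-|/IH [z [<- hz]]]; first by exists x; split => //; left.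
  by exists z; split => //; right.
case=> z [hzy [hxz|hz]]; first by left; rewrite hxz.
by right; apply/IH; exists z.
Qed.

Section KF.
Variable A : pzRingType.
Hypothesis HA : factor_hyp A.

Lemma KF (I : set A) : ideal I ->
  exists L : seq (set A), [/\ forall P, List.In P L -> prime_ideal P,
     forall P, List.In P L -> I `<=` P & prodl L `<=` I].
Proof.
move=> hI.
pose N := Iof (Vset I).
have hN : ideal N by apply: Iof_ideal; apply: Vset_Spec.
have IN : I `<=` N by apply: Iof_Vset.
pose g1 := qmorph hI.
have [_ [n [n0 hn]]] := HA (qmorph_surj hI).
have nilN : ipow N n `<=` I.
  move=> x0 hx0; apply/(qmorph_ker hI); apply: (hn (g1 x0)).
  eapply (ipowS (n:=n) (X := g1 @` N)); last by apply: img_ipow; exists x0.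
  move=> _ [x Nx <-] P' hP'.
  have hpre := pre_prime (qmorph_surj hI) hP'.
  apply: (Nx (g1 @^-1` P')); split => // i Ii.
  rewrite /preimage /= (proj2 (qmorph_ker hI i) Ii).
  by case: (prime_ideal_ideal hP').
pose g2 := qmorph hN.
have sp : semiprime_ring (qtype hN : pzRingType).
  move=> A' hA' [m [m0 hm]]; apply/seteqP; split; last first.
    by move=> _ ->; case: hA'.
  move=> a' Aa'; have [a ha] := qmorph_surj hN a'.
  pose A'' := g2 @^-1` A'.
  have hm2 : ipow A'' m `<=` N.
    move=> x hx; apply/(qmorph_ker hN); apply: (hm (g2 x)).
    eapply (ipowS (n:=m) (X := g2 @` A'')); first by move=> _ [y hy <-].
    by apply: img_ipow; exists x.
  have A''N : A'' `<=` N.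
    move=> y hy P VP; case: VP => hP IP.
    move: hm2 hy; clear hm; case: m m0 => // m _ hm2.
    apply: (prime_ipow hP (pre_ideal g2 hA')).
    by move=> z /hm2 hz; apply: hz.
  have : N a by apply: A''N; rewrite /A'' /preimage /= -/g2 ha.
  by move/(qmorph_ker hN); rewrite -/g2 ha.
have [hgol _] := HA (qmorph_surj hN).
have [L2 [hL2 h02]] := goldie_finite_T sp (hgol sp).
pose L1 := map (preimage g2) L2.
have hL1 : forall P, List.In P L1 -> prime_ideal P /\ N `<=` P.
  move=> P /In_map_iff [P2 [<- hP2]]; split.
    exact: (pre_prime (qmorph_surj hN) (hL2 _ hP2)).
  move=> x Nx; rewrite /preimage /= (proj2 (qmorph_ker hN x) Nx).
  by case: (prime_ideal_ideal (hL2 _ hP2)).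
have hL1i : all_ideal L1 by move=> P /hL1 [/prime_ideal_ideal].
have prodN : prodl L1 `<=` N.
  move=> x hx; apply/(qmorph_ker hN); apply: (h02 (g2 x)) => P2 hP2.
  apply: (prodl_sub_each hL1i (A := preimage g2 P2)) hx.
  by apply/In_map_iff; exists P2.
case: n n0 hn nilN => // n _ hn nilN.
exists (flatten (nseq n.+1 L1)); split.
- by move=> P /In_flatten_nseq /hL1 [].
- by move=> P /In_flatten_nseq /hL1 [_ h]; exact: (subset_trans IN h).
- exact: (subset_trans (prodl_flatten (n:=n) hN prodN) nilN).
Qed.

End KF.


Lemma list_min (T : Type) (L : seq (set T)) (p : set T -> Prop) :
  (exists A, List.In A L /\ p A) ->
  exists A, [/\ List.In A L, p A & forall B, List.In B L -> p B -> B `<=` A -> A `<=` B].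
Proof.
elim: L => [|A0 L IH]; first by case=> ? [].
move=> hex.
case: (pselect (exists A, List.In A L /\ p A)) => [/IH [A1 [inA1 pA1 minA1]]|nex].
  case: (pselect (p A0 /\ A0 `<=` A1 /\ ~ (A1 `<=` A0))) => [[pA0 [A01 nA10]]|hn].
    exists A0; split => //; first by left.
    move=> B [<-//|inB] pB BA0; exfalso; apply: nA10.
    exact: (subset_trans (minA1 B inB pB (subset_trans BA0 A01)) BA0).
  exists A1; split => //; first by right.
  move=> B [<-|inB] pB BA1; last exact: minA1.
  by apply: contrapT => nA; apply: hn.
have pA0 : p A0.
  case: hex => A [[<-//|inA] pA]; exfalso; apply: nex; by exists A.
exists A0; split => //; first by left.
by move=> B [<-//|inB] pB; exfalso; apply: nex; exists B.
Qed.

Lemma all_ideal_map (T1 T2 : pzRingType) (h : set T1 -> set T2) L :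
  (forall X, List.In X L -> ideal (h X)) -> all_ideal (map h L).
Proof. by move=> hh X /In_map_iff [Y [<- /hh]]. Qed.

Section Main.
Variables (R S : pzRingType) (f : {rmorphism R -> S}).
Hypotheses (HR : factor_hyp R) (HS : factor_hyp S).

Local Notation extS := (extS f).

Lemma extS_ideal X : ideal (extS X).
Proof.
have hY := @mulset_addsub S setT (f @` X).
split.
- by move=> x; rewrite mul0r; case: hY.
- by move=> a b ha hb x; rewrite mulrBl; apply: hY.2.
- move=> r a ha x; rewrite -mulrA.
  apply: (addspan_mull (X := [set a * b | a in setT & b in f @` X])) (ha x) => //.
  by move=> _ [s _ [y hy <-]]; rewrite mulrA; apply: mulset_gen.
- by move=> r a ha x; rewrite -mulrA; apply: ha.
Qed.

Lemma extS_mono X Y : X `<=` Y -> extS X `<=` extS Y.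
Proof.
move=> XY s hs x; apply: (mulsetS (A:=setT) (C:=setT)) (hs x) => //.
by move=> _ [y hy <-]; exists y => //; apply: XY.
Qed.

Lemma extS_mul A B : mulset (extS A) (extS B) `<=` extS (mulset A B).
Proof.
apply: mulset_min; first by case: (extS_ideal (mulset A B)) => ? ? _ _; split.
move=> x y hx hy s; rewrite -mulrA.
have hT := @mulset_addsub S setT (f @` mulset A B).
apply: (addspan_mull (X := [set a * b | a in setT & b in f @` B])) (hy s) => //.
move=> _ [s' _ [_ [b Bb <-]] <-]; rewrite mulrA.
apply: (addspan_mulr (X := [set a * b | a in setT & b in f @` A])) (hx s') => //.
move=> _ [s'' _ [_ [a Aa <-]] <-]; rewrite -mulrA -rmorphM.
by apply: mulset_gen => //; exists (a * b) => //; apply: mulset_gen.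
Qed.

Lemma extS_prodl L : prodl (map extS L) `<=` extS (prodl L).
Proof.
elim: L => [|A L IH] /=.
  move=> s _ x; rewrite -[s * x]mulr1 -(rmorph1 f).
  by apply: mulset_gen => //; exists 1.
eapply subset_trans; last exact: extS_mul.
exact: mulsetS.
Qed.

Lemma extS_pre P : ideal P -> extS (f @^-1` P) `<=` P.
Proof.
move=> hP s hs; rewrite -[s]mulr1.
apply: (mulset_idealr (A := setT) hP).
apply: (mulsetS (A:=setT) (C:=setT)) (hs 1) => //.
by move=> _ [y hy <-].
Qed.

Definition minover (J M : set R) := [/\ prime_ideal M, J `<=` M &
  forall Q', prime_ideal Q' -> J `<=` Q' -> Q' `<=` M -> Q' = M].

Lemma exists_min J Q : ideal J -> prime_ideal Q -> J `<=` Q ->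
  exists M, minover J M /\ M `<=` Q.
Proof.
move=> hJ hQ JQ.
have [L [hLp hLJ hLprod]] := KF HR hJ.
have hLi : all_ideal L by move=> A /hLp /prime_ideal_ideal.
have [A inA AQ] := prime_prodl hQ hLi (subset_trans hLprod JQ).
have [M [inM MQ minM]] := list_min (p := fun B => B `<=` Q) (ex_intro _ A (conj inA AQ)).
exists M; split => //; split; [exact: hLp| exact: hLJ|].
move=> Q' hQ' JQ' Q'M.
have [B inB BQ'] := prime_prodl hQ' hLi (subset_trans hLprod JQ').
have := minM B inB (subset_trans BQ' (subset_trans Q'M MQ)) (subset_trans BQ' Q'M).
move=> MB; apply/seteqP; split => //; exact: (subset_trans MB BQ').
Qed.

Definition Key := forall P, prime_ideal P -> forall Q, prime_ideal Q -> extS Q `<=` P ->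
  forall Q', prime_ideal Q' -> f @^-1` P `<=` Q' -> Q `<=` Q'.

Lemma Key_adj : left_adjoint f -> Key.
Proof.
move=> hadj P hP Q hQ hext Q' hQ' hPQ'.
have := (hadj (Vset P) (Vset Q) (Vset_closed P) (Vset_closed Q)).2.
rewrite /lambda /rho !Iof_Vset_prime //.
have H1 : Vset P `<=` Vset (extS Q).
  by move=> P' [hP' PP']; split => //; exact: (subset_trans hext PP').
by move=> /(_ H1) /(_ Q') [] //.
Qed.

Lemma Key_iii : cond_iii f -> Key.
Proof.
move=> h3 P hP Q hQ hext Q' hQ' hPQ'.
have [t [t0 ht]] := h3 Q hQ.
have h1 : ipow (f @` Q) t `<=` extS Q.
  by move=> x hx s; apply: ht; apply: mulset_gen.
have h2 : ipow Q t `<=` Q'.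
  move=> y hy; apply: hPQ'; apply: hext; apply: h1.
  by apply: img_ipow; exists y.
case: t t0 ht h1 h2 => // t _ _ _ h2.
exact: (prime_ipow hQ' (prime_ideal_ideal hQ) h2).
Qed.

Lemma pre_idealf P : prime_ideal P -> ideal (f @^-1` P).
Proof. by move=> /prime_ideal_ideal; apply: pre_ideal. Qed.

Lemma ext_choose P I L : prime_ideal P -> (forall Q, List.In Q L -> prime_ideal Q) ->
  prodl L `<=` I -> extS I `<=` P -> exists2 Q, List.In Q L & extS Q `<=` P.
Proof.
move=> hP hL hLI hIP.
have hi : all_ideal (map extS L) by apply: all_ideal_map => X _; apply: extS_ideal.
have := prime_prodl hP hi (subset_trans (extS_prodl (L:=L)) (subset_trans (extS_mono hLI) hIP)).
by case=> E /In_map_iff [Q [<- inQ]] hE; exists Q.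
Qed.

Lemma SV : Key -> forall P, prime_ideal P -> exists Q,
  [/\ prime_ideal Q, f @^-1` P `<=` Q, extS Q `<=` P, rcorr f P = [set Q] &
      forall Q', prime_ideal Q' -> f @^-1` P `<=` Q' -> Q `<=` Q'].
Proof.
move=> hK P hP.
have [L [hLp hLJ hLprod]] := KF HR (pre_idealf hP).
have [Q inQ hQP] := ext_choose hP hLp hLprod (extS_pre (prime_ideal_ideal hP)).
have hQ := hLp Q inQ; have JQ := hLJ Q inQ.
have hall := hK P hP Q hQ hQP.
exists Q; split => //.
apply/seteqP; split.
  move=> M [hM [JM minM]].
  exact: (esym (minM Q hQ JQ (hall M hM JM))).
move=> _ ->; split => //; split => // Q' hQ' JQ' Q'Q.
by apply/seteqP; split => //; apply: hall.
Qed.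

Lemma Key_ii : Key -> cond_ii f.
Proof.
move=> hK.
have hc : forall I, ideal I -> rinv f (Vset I) = Vset (extS I).
  move=> I hI; apply/seteqP; split.
    move=> P [hP hr]; have [Q [hQ JQ hQP hrc _]] := SV hK hP.
    have : rcorr f P Q by rewrite hrc.
    move=> /hr [_ IQ]; split => //.
    exact: (subset_trans (extS_mono IQ) hQP).
  move=> P [hP hIP]; split => //.
  have [L [hLp hLJ hLprod]] := KF HR hI.
  have [Q inQ hQP] := ext_choose hP hLp hLprod hIP.
  move=> M [hM [JM _]]; split => //.
  exact: (subset_trans (hLJ Q inQ) (hK P hP Q (hLp Q inQ) hQP M hM JM)).
split => //.
- by move=> P hP; have [Q [_ _ _ h _]] := SV hK hP; exists Q.
- move=> V cV; rewrite (closed_Iof cV) hc; first exact: Vset_closed.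
  by apply: Iof_ideal; apply: closed_sub.
Qed.

Lemma ii_adj : cond_ii f -> left_adjoint f.
Proof.
case=> _ _ hc U V cU cV.
have hIV : ideal (Iof V) by apply: Iof_ideal; apply: closed_sub.
have hIU : ideal (Iof U) by apply: Iof_ideal; apply: closed_sub.
have rhoV : rho f V = rinv f V by rewrite /rho -hc // -closed_Iof.
rewrite rhoV; split.
  move=> h P UP; split; first exact: (closed_sub cU).
  move=> M [hM [JM _]]; apply: h; split => //.
  by move=> x hx; apply: JM; apply: hx.
move=> h Q [hQ hQU].
have [LS [hLSp hLSJ hLSprod]] := KF HS hIU.
have hi : all_ideal (map (preimage f) LS).
  by apply: all_ideal_map => X /hLSp /prime_ideal_ideal; apply: pre_ideal.
have hsub : prodl (map (preimage f) LS) `<=` Q.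
  move=> x /(pre_prodl (g:=f) (L:=LS)) hx; apply: hQU.
  exact: hLSprod.
have [E /In_map_iff [P [<- inP]] hPQ] := prime_prodl hQ hi hsub.
have hP := hLSp P inP.
have UP : U P by rewrite (closed_Iof cU); split; [exact: hP| exact: hLSJ].
have [M [[hM JM minM] MQ]] := exists_min (pre_idealf hP) hQ hPQ.
have [_ hr] := h P UP.
have : V M by apply: hr; split => //; split.
rewrite (closed_Iof cV) => -[_ IVM].
by rewrite (closed_Iof cV) Vset_Iof; split => //; exact: (subset_trans IVM MQ).
Qed.

Lemma ipow_common (Y : set S) (LS : seq (set S)) : all_ideal LS ->
  (forall P, List.In P LS -> exists k, ipow Y k `<=` P) ->
  exists K, forall P, List.In P LS -> ipow Y K `<=` P.
Proof.
elim: LS => [|A L IH] hL h; first by exists 0%N.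
have [k hk] := h A (or_introl erefl).
have [K hK] := IH (fun B hB => hL B (or_intror hB)) (fun B hB => h B (or_intror hB)).
exists (maxn k K) => P [<-|inP].
  by apply: (ipow_le_sub (k:=k)) => //; [apply: hL; left| exact: leq_maxl].
by apply: (ipow_le_sub (k:=K)) => //; [apply: hL; right| exact: leq_maxr| exact: hK].
Qed.

Lemma Key_iv : Key -> cond_iv f.
Proof.
move=> hK I hI.
have hJ := extS_ideal I.
have [LS [hLSp hLSJ hLSprod]] := KF HS hJ.
have hLSi : all_ideal LS by move=> X /hLSp /prime_ideal_ideal.
have hk : forall P, List.In P LS -> exists k, ipow (f @` I) k `<=` P.
  move=> P inP; have hP := hLSp P inP.
  have [L [hLp hLJ hLprod]] := KF HR hI.
  have [Q inQ hQP] := ext_choose hP hLp hLprod (hLSJ P inP).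
  have hall := hK P hP Q (hLp Q inQ) hQP.
  have [L2 [hL2p hL2J hL2prod]] := KF HR (pre_idealf hP).
  have hL2i : all_ideal L2 by move=> X /hL2p /prime_ideal_ideal.
  have h2 := ipow_prodl2 hI hL2i (fun A hA => subset_trans (hLJ Q inQ) (hall A (hL2p A hA) (hL2J A hA))).
  exists (size L2).+1 => y /ipow_img [x hx <-].
  exact: (hL2prod x (h2 x hx)).
have [K hKP] := ipow_common hLSi hk.
exists (K * size LS).+1; split => //.
have ht : ipow (f @` I) (K * size LS).+1 `<=` extS I.
  apply: ipowS_sub => //.
  exact: (subset_trans (ipow_prodl hLSi hKP) hLSprod).
apply: mulset_min; first exact: mulset_addsub.
by move=> x s hx _; apply: ht.
Qed.

Lemma iv_iii : cond_iv f -> cond_iii f.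
Proof. by move=> h Q hQ; apply: h; apply: prime_ideal_ideal. Qed.

End Main.

Local Close Scope classical_set_scope.
Local Close Scope ring_scope.

Theorem theorem3p15 (R S : pzRingType) (f : {rmorphism R -> S})
  (HR : factor_hyp R) (HS : factor_hyp S) :
  (left_adjoint f <-> cond_ii f) /\
  (left_noetherian S ->
     (left_adjoint f <-> cond_iii f) /\ (left_adjoint f <-> cond_iv f)).
Proof.
have KA := Key_adj (f:=f).
have KiiA := Key_ii HR (f:=f).
have iiA := ii_adj HR HS (f:=f).
split; first by split => [h|h]; [apply: KiiA; apply: KA| apply: iiA].
move=> _; split; split => h.
- by apply: iv_iii; apply: (Key_iv HR HS); apply: KA.
- by apply: iiA; apply: KiiA; apply: Key_iii.
- by apply: (Key_iv HR HS); apply: KA.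
- by apply: iiA; apply: KiiA; apply: Key_iii; apply: iv_iii.
Qed.
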